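(* Let $\mathbb{C}$ be a regular majority category. For any regular epimorphism $f:X\to Y$ in $\mathbb{C}$ and any reflexive relations $R,S$ on $X$, $f(R\cap S)=f(R)\cap f(S)$.
   Context: A category is regular if it has finite limits and coequalizers of kernel pairs and regular epimorphisms are pullback-stable; morphisms factor as regular epi followed by mono. A relation on $X$ is a subobject of $X\times X$, reflexive if the diagonal factors through it; $\cap$ is intersection (pullback) of subobjects. $f(R)$ denotes the image of $R$ under $f\times f$ (mono part of the regular epi–mono factorization of $(f\times f)r$ for $r$ representing $R$). For $w:S\to W$ and subobject $A$ of $W$, $w\in_S A$ means $w$ factors through a representative of $A$. A ternary relation $R\leqslant X\times Y\times Z$ is majority-selecting if for all $S$ and $x,x':S\to X$, $y,y':S\to Y$, $z,z':S\to Z$: $(x,y,z')\in_S R$, $(x,y',z)\in_S R$, $(x',y,z)\in_S R$ imply $(x,y,z)\in_S R$. A category with products is a majority category if all its ternary relations are majority-selecting. *)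

(* Defs.v *)
Record Category := {
  ob :> Type;
  hom : ob -> ob -> Type;
  comp : forall {a b c : ob}, hom b c -> hom a b -> hom a c;
  idm : forall a : ob, hom a a;
  comp_assoc : forall (a b c d : ob) (h : hom c d) (g : hom b c) (f : hom a b),
      comp h (comp g f) = comp (comp h g) f;
  comp_id_l : forall (a b : ob) (f : hom a b), comp (idm b) f = f;
  comp_id_r : forall (a b : ob) (f : hom a b), comp f (idm a) = f
}.

Arguments comp {c a b c0} _ _ : rename.
Arguments idm {c} a : rename.
Notation "g \o f" := (comp g f) (at level 40, left associativity).

Section Cat.
Context {C : Category}.

Definition mono {A B : C} (m : hom C A B) : Prop :=
  forall (Z : C) (g h : hom C Z A), m \o g = m \o h -> g = h.

Definition is_terminal (T : C) : Prop :=
  forall A : C, exists t : hom C A T, forall t' : hom C A T, t' = t.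

Definition is_product {A B P : C} (p1 : hom C P A) (p2 : hom C P B) : Prop :=
  forall (Q : C) (q1 : hom C Q A) (q2 : hom C Q B),
    exists u : hom C Q P, p1 \o u = q1 /\ p2 \o u = q2 /\
      forall v : hom C Q P, p1 \o v = q1 -> p2 \o v = q2 -> v = u.

Definition is_product3 {A B D P : C}
    (p1 : hom C P A) (p2 : hom C P B) (p3 : hom C P D) : Prop :=
  forall (Q : C) (q1 : hom C Q A) (q2 : hom C Q B) (q3 : hom C Q D),
    exists u : hom C Q P, p1 \o u = q1 /\ p2 \o u = q2 /\ p3 \o u = q3 /\
      forall v : hom C Q P, p1 \o v = q1 -> p2 \o v = q2 -> p3 \o v = q3 -> v = u.

Definition is_equalizer {A B E : C} (f g : hom C A B) (e : hom C E A) : Prop :=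
  f \o e = g \o e /\
  forall (Q : C) (q : hom C Q A), f \o q = g \o q ->
    exists u : hom C Q E, e \o u = q /\ forall v : hom C Q E, e \o v = q -> v = u.

Definition is_pullback {A B D P : C} (f : hom C A D) (g : hom C B D)
    (p1 : hom C P A) (p2 : hom C P B) : Prop :=
  f \o p1 = g \o p2 /\
  forall (Q : C) (q1 : hom C Q A) (q2 : hom C Q B), f \o q1 = g \o q2 ->
    exists u : hom C Q P, p1 \o u = q1 /\ p2 \o u = q2 /\
      forall v : hom C Q P, p1 \o v = q1 -> p2 \o v = q2 -> v = u.

Definition is_coequalizer {A B Q : C} (u v : hom C A B) (q : hom C B Q) : Prop :=
  q \o u = q \o v /\
  forall (Z : C) (z : hom C B Z), z \o u = z \o v ->
    exists w : hom C Q Z, w \o q = z /\ forall w' : hom C Q Z, w' \o q = z -> w' = w.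

Definition regular_epi {B Q : C} (q : hom C B Q) : Prop :=
  exists (A : C) (u v : hom C A B), is_coequalizer u v q.

Definition has_finite_limits : Prop :=
  (exists T : C, is_terminal T) /\
  (forall A B : C, exists (P : C) (p1 : hom C P A) (p2 : hom C P B), is_product p1 p2) /\
  (forall (A B : C) (f g : hom C A B), exists (E : C) (e : hom C E A), is_equalizer f g e) /\
  (forall (A B D : C) (f : hom C A D) (g : hom C B D),
      exists (P : C) (p1 : hom C P A) (p2 : hom C P B), is_pullback f g p1 p2).

Definition regular_category : Prop :=
  has_finite_limits /\
  (forall (A B K : C) (f : hom C A B) (k1 k2 : hom C K A),
      is_pullback f f k1 k2 -> exists (Q : C) (q : hom C A Q), is_coequalizer k1 k2 q) /\
  (forall (A B D P : C) (g : hom C A D) (e : hom C B D)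
          (p1 : hom C P A) (p2 : hom C P B),
      regular_epi e -> is_pullback g e p1 p2 -> regular_epi p1) /\
  (forall (A B : C) (f : hom C A B),
      exists (I : C) (e : hom C A I) (m : hom C I B), regular_epi e /\ mono m /\ m \o e = f).

Definition in_sub {S W M : C} (w : hom C S W) (m : hom C M W) : Prop :=
  exists h : hom C S M, m \o h = w.

Definition same_sub {W M N : C} (m : hom C M W) (n : hom C N W) : Prop :=
  in_sub m n /\ in_sub n m.

Definition in_rel3 {X Y Z P R S : C}
    (p1 : hom C P X) (p2 : hom C P Y) (p3 : hom C P Z) (r : hom C R P)
    (x : hom C S X) (y : hom C S Y) (z : hom C S Z) : Prop :=
  exists t : hom C S P, p1 \o t = x /\ p2 \o t = y /\ p3 \o t = z /\ in_sub t r.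

Definition majority_selecting {X Y Z P R : C}
    (p1 : hom C P X) (p2 : hom C P Y) (p3 : hom C P Z) (r : hom C R P) : Prop :=
  forall (S : C) (x x' : hom C S X) (y y' : hom C S Y) (z z' : hom C S Z),
    in_rel3 p1 p2 p3 r x y z' -> in_rel3 p1 p2 p3 r x y' z ->
    in_rel3 p1 p2 p3 r x' y z -> in_rel3 p1 p2 p3 r x y z.

Definition majority_category : Prop :=
  (exists T : C, is_terminal T) /\
  (forall A B : C, exists (P : C) (p1 : hom C P A) (p2 : hom C P B), is_product p1 p2) /\
  forall (X Y Z P : C) (p1 : hom C P X) (p2 : hom C P Y) (p3 : hom C P Z),
    is_product3 p1 p2 p3 ->
    forall (R : C) (r : hom C R P), mono r -> majority_selecting p1 p2 p3 r.

Definition reflexive_rel {X PX R : C} (pi1 pi2 : hom C PX X) (r : hom C R PX) : Prop :=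
  exists d : hom C X PX, pi1 \o d = idm X /\ pi2 \o d = idm X /\ in_sub d r.

End Cat.

Arguments is_terminal {C} T.
Arguments has_finite_limits C : clear implicits.
Arguments regular_category C : clear implicits.
Arguments majority_category C : clear implicits.

(* Main.v *)
Require Import Defs.

Section S.
Context {C : Category}.

Ltac nf := repeat rewrite <- comp_assoc.

Lemma compE {a b c d : C} (x : hom C b c) (y : hom C a b) (z : hom C a c) :
  x \o y = z -> forall (w : hom C d a), x \o (y \o w) = z \o w.
Proof. intros H w. rewrite comp_assoc, H. reflexivity. Qed.

Lemma regepi_epi {A B D : C} (e : hom C A B) (g h : hom C B D) :
  regular_epi e -> g \o e = h \o e -> g = h.
Proof.
  intros [E [u [v [Heq Hu]]]] H.
  destruct (Hu _ (g \o e)) as [w [_ Hw]].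
  { nf. rewrite Heq. reflexivity. }
  rewrite (Hw g eq_refl), (Hw h (eq_sym H)). reflexivity.
Qed.

Lemma lift {A B M W : C} (e : hom C A B) (m : hom C M W) (a : hom C A M) (b : hom C B W) :
  regular_epi e -> mono m -> m \o a = b \o e -> exists d, m \o d = b /\ d \o e = a.
Proof.
  intros He Hm H. pose proof He as He'.
  destruct He as [E [u [v [Heq Hu]]]].
  destruct (Hu _ a) as [d [Hd _]].
  { apply Hm. rewrite !comp_assoc, H. nf. rewrite Heq. reflexivity. }
  exists d. split; [|exact Hd].
  apply (regepi_epi e); [exact He'|]. nf. rewrite Hd. exact H.
Qed.

Lemma prod_ext {A B P Q : C} (p1 : hom C P A) (p2 : hom C P B) (u v : hom C Q P) :
  is_product p1 p2 -> p1 \o u = p1 \o v -> p2 \o u = p2 \o v -> u = v.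
Proof.
  intros HP H1 H2. destruct (HP _ (p1 \o u) (p2 \o u)) as [w [_ [_ Hw]]].
  rewrite (Hw u eq_refl eq_refl), (Hw v (eq_sym H1) (eq_sym H2)). reflexivity.
Qed.

Lemma prod3_of {A B D P1 P : C} (a1 : hom C P1 A) (a2 : hom C P1 B)
  (c1 : hom C P P1) (c2 : hom C P D) :
  is_product a1 a2 -> is_product c1 c2 -> is_product3 (a1 \o c1) (a2 \o c1) c2.
Proof.
  intros H1 H2 Q q1 q2 q3.
  destruct (H1 Q q1 q2) as [u12 [Hu1 [Hu2 _]]].
  destruct (H2 Q u12 q3) as [u [Hc1 [Hc2 _]]].
  exists u. nf. rewrite Hc1. split; [exact Hu1|]. split; [exact Hu2|]. split; [exact Hc2|].
  intros v Hv1 Hv2 Hv3. repeat rewrite <- comp_assoc in *.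
  apply (prod_ext c1 c2); [exact H2| |congruence].
  rewrite Hc1. apply (prod_ext a1 a2); [exact H1|congruence|congruence].
Qed.

Lemma MIL (reg : regular_category C) (maj : majority_category C)
 {X Y Z P W T : C} (p1 : hom C P X) (p2 : hom C P Y) (p3 : hom C P Z)
 (H3 : is_product3 p1 p2 p3) (g : hom C W P)
 (x x' : hom C T X) (y y' : hom C T Y) (z z' : hom C T Z) (h1 h2 h3 : hom C T W) :
 p1 \o (g \o h1) = x -> p2 \o (g \o h1) = y -> p3 \o (g \o h1) = z' ->
 p1 \o (g \o h2) = x -> p2 \o (g \o h2) = y' -> p3 \o (g \o h2) = z ->
 p1 \o (g \o h3) = x' -> p2 \o (g \o h3) = y -> p3 \o (g \o h3) = z ->
 exists T' (e : hom C T' T) (h : hom C T' W), regular_epi e /\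
   p1 \o (g \o h) = x \o e /\ p2 \o (g \o h) = y \o e /\ p3 \o (g \o h) = z \o e.
Proof.
  intros E11 E12 E13 E21 E22 E23 E31 E32 E33.
  destruct reg as [[_ [_ [_ PB]]] [_ [STAB FACT]]].
  destruct maj as [_ [_ MAJ]].
  destruct (FACT _ _ g) as [I [q [m [Hq [Hm Hmq]]]]].
  pose proof (MAJ _ _ _ _ p1 p2 p3 H3 I m Hm) as MS.
  assert (Hin : forall (h : hom C T W), in_sub (g \o h) m).
  { intro h. exists (q \o h). rewrite comp_assoc, Hmq. reflexivity. }
  destruct (MS T x x' y y' z z') as [t [Ht1 [Ht2 [Ht3 [k Hk]]]]].
  - exists (g \o h1). repeat split; auto.
  - exists (g \o h2). repeat split; auto.
  - exists (g \o h3). repeat split; auto.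
  - destruct (PB _ _ _ k q) as [T' [e [h [Hpb Hpbu]]]].
    exists T', e, h. split; [exact (STAB _ _ _ _ k q e h Hq (conj Hpb Hpbu))|].
    assert (G : g \o h = t \o e).
    { rewrite <- Hmq, <- Hk. nf. rewrite Hpb. reflexivity. }
    rewrite G. nf. rewrite <- Ht1, <- Ht2, <- Ht3. nf. auto.
Qed.


Lemma Lspan (reg : regular_category C) (maj : majority_category C)
 {X WA WB WC : C} (a1 a2 : hom C WA X) (b1 b2 : hom C WB X) (c1 c2 : hom C WC X)
 (rA : forall T (x : hom C T X), exists al, a1 \o al = x /\ a2 \o al = x)
 (rB : forall T (x : hom C T X), exists al, b1 \o al = x /\ b2 \o al = x)
 (rC : forall T (x : hom C T X), exists al, c1 \o al = x /\ c2 \o al = x)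
 {T : C} (x y z : hom C T X) (al : hom C T WA) (be : hom C T WB) (ga : hom C T WC) :
 a1 \o al = x -> a2 \o al = z -> b1 \o be = x -> b2 \o be = y -> c1 \o ga = y -> c2 \o ga = z ->
 exists T' (e : hom C T' T) (w : hom C T' X) al1 be1 al2 ga2, regular_epi e /\
  a1 \o al1 = x \o e /\ a2 \o al1 = w /\ b1 \o be1 = x \o e /\ b2 \o be1 = w /\
  a1 \o al2 = w /\ a2 \o al2 = z \o e /\ c1 \o ga2 = w /\ c2 \o ga2 = z \o e.
Proof.
  intros Ha1 Ha2 Hb1 Hb2 Hc1 Hc2.
  pose proof reg as reg'.
  destruct reg' as [[_ [PR [_ PB]]] _].
  destruct (PR X X) as [PX2 [q1 [q2 HPX]]].
  destruct (PR X PX2) as [P1 [s1 [s2 HP1]]].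
  destruct (PR P1 X) as [P3 [t1 [t2 HP3]]].
  pose proof (prod3_of s1 s2 t1 t2 HP1 HP3) as H3.
  destruct (PB _ _ _ a2 b2) as [W1 [u1 [u2 [E1 U1]]]].
  destruct (PB _ _ _ (a2 \o u1) a1) as [W2 [v1 [v2 [E2 U2]]]].
  destruct (PB _ _ _ (a2 \o (u1 \o v1)) c1) as [W3 [k1 [k2 [E3 U3]]]].
  set (A1 := u1 \o (v1 \o k1)). set (B := u2 \o (v1 \o k1)). set (A2 := v2 \o k1).
  assert (Build : forall (al1 : hom C T WA) be al2 ga, b2 \o be = a2 \o al1 ->
     a1 \o al2 = a2 \o al1 -> c1 \o ga = a2 \o al1 ->
     exists h, A1 \o h = al1 /\ B \o h = be /\ A2 \o h = al2 /\ k2 \o h = ga).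
  { intros al1 be0 al2 ga0 F1 F2 F3.
    destruct (U1 _ al1 be0) as [h1 [G11 [G12 _]]]; [auto|].
    destruct (U2 _ h1 al2) as [h2 [G21 [G22 _]]].
    { nf. rewrite G11. auto. }
    destruct (U3 _ h2 ga0) as [h3 [G31 [G32 _]]].
    { nf. rewrite G21, G11. auto. }
    exists h3. unfold A1, B, A2. nf. rewrite G31, G21, G11, G12, G22, G32. auto. }
  destruct (HPX _ (a1 \o A1) (a2 \o A2)) as [mp [Mp1 [Mp2 _]]].
  destruct (H3 _ (b1 \o B) mp (c2 \o k2)) as [g [Gg1 [Gg2 [Gg3 _]]]].
  assert (GE1 : forall T0 (h : hom C T0 W3), (s1 \o t1) \o (g \o h) = b1 \o (B \o h)).
  { intros. rewrite comp_assoc, Gg1. nf. auto. }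
  assert (GE2 : forall T0 (h : hom C T0 W3), (s2 \o t1) \o (g \o h) = mp \o h).
  { intros. rewrite comp_assoc, Gg2. nf. auto. }
  assert (GE3 : forall T0 (h : hom C T0 W3), t2 \o (g \o h) = c2 \o (k2 \o h)).
  { intros. rewrite comp_assoc, Gg3. nf. auto. }
  destruct (HPX _ x z) as [mxz [Mxz1 [Mxz2 _]]].
  destruct (HPX _ y y) as [myy [Myy1 [Myy2 _]]].
  destruct (rA _ x) as [dAx [dAx1 dAx2]].
  destruct (rA _ y) as [dAy [dAy1 dAy2]].
  destruct (rA _ z) as [dAz [dAz1 dAz2]].
  destruct (rB _ x) as [dBx [dBx1 dBx2]].
  destruct (rB _ z) as [dBz [dBz1 dBz2]].
  destruct (rC _ x) as [dCx [dCx1 dCx2]].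
  destruct (rC _ z) as [dCz [dCz1 dCz2]].
  (* instance 1 : (x, (x,z), x) with w = x *)
  destruct (Build dAx dBx al dCx) as [h1 [I11 [I12 [I13 I14]]]]; [congruence|congruence|congruence|].
  (* instance 2 : (x, (y,y), z) with w = y *)
  destruct (Build dAy be dAy ga) as [h2 [I21 [I22 [I23 I24]]]]; [congruence|congruence|congruence|].
  (* instance 3 : (z, (x,z), z) with w = z *)
  destruct (Build al dBz dAz dCz) as [h3 [I31 [I32 [I33 I34]]]]; [congruence|congruence|congruence|].
  assert (MP : forall T0 (h : hom C T0 W3) (m : hom C T0 PX2), q1 \o m = a1 \o (A1 \o h) ->
            q2 \o m = a2 \o (A2 \o h) -> mp \o h = m).
  { intros T0 h m F1 F2. apply (prod_ext q1 q2); auto; rewrite comp_assoc; [rewrite Mp1|rewrite Mp2]; nf; auto. }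
  destruct (MIL reg maj _ _ _ H3 g x z mxz myy z x h1 h2 h3) as [T' [e [h [He [K1 [K2 K3]]]]]];
    rewrite ?GE1, ?GE2, ?GE3.
  all: try (apply MP; rewrite ?Mxz1, ?Mxz2, ?Myy1, ?Myy2).
  all: rewrite ?I11, ?I12, ?I13, ?I14, ?I21, ?I22, ?I23, ?I24, ?I31, ?I32, ?I33, ?I34; auto.
  rewrite GE1 in K1. rewrite GE2 in K2. rewrite GE3 in K3.
  assert (KA1 : a1 \o (A1 \o h) = x \o e).
  { rewrite comp_assoc, <- Mp1, <- Mxz1. nf. rewrite K2. reflexivity. }
  assert (KA2 : a2 \o (A2 \o h) = z \o e).
  { rewrite comp_assoc, <- Mp2, <- Mxz2. nf. rewrite K2. reflexivity. }
  exists T', e, (a2 \o (A1 \o h)), (A1 \o h), (B \o h), (A2 \o h), (k2 \o h).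
  rewrite comp_assoc in E3.
  split; [exact He|]. split; [exact KA1|]. split; [reflexivity|]. split; [exact K1|].
  split. { unfold B, A1. rewrite !comp_assoc, E1. reflexivity. }
  split. { unfold A2, A1. rewrite !comp_assoc, <- E2. reflexivity. }
  split; [exact KA2|]. split.
  { unfold A1. rewrite !comp_assoc, <- E3. reflexivity. }
  exact K3.
Qed.


Lemma preE {a b c d : C} (x : hom C b c) (y : hom C a b) (z : hom C a c) :
  x \o y = z -> forall (h : hom C c d), (h \o x) \o y = h \o z.
Proof. intros H h. rewrite <- comp_assoc, H. reflexivity. Qed.

End S.

Ltac nf := repeat rewrite <- comp_assoc.
Ltac rc E := first [rewrite (compE _ _ _ E) | rewrite E]; nf.
Ltac la := repeat rewrite comp_assoc.
Ltac la_in H := repeat rewrite comp_assoc in H.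
Ltac rw E := first [rewrite (preE _ _ _ E) | rewrite E].
Ltac rwr E := first [rewrite <- (preE _ _ _ E) | rewrite <- E].

Theorem corollary3p5 (C : Category) :
  regular_category C -> majority_category C ->
  forall (X Y : C) (f : hom C X Y), regular_epi f ->
  forall (PX : C) (pi1 pi2 : hom C PX X), is_product pi1 pi2 ->
  forall (PY : C) (rho1 rho2 : hom C PY Y), is_product rho1 rho2 ->
  forall ff : hom C PX PY, rho1 \o ff = f \o pi1 -> rho2 \o ff = f \o pi2 ->
  forall (R : C) (r : hom C R PX), mono r -> reflexive_rel pi1 pi2 r ->
  forall (S : C) (s : hom C S PX), mono s -> reflexive_rel pi1 pi2 s ->
  (* R /\ S, as the pullback of r and s, represented by r o i1 *)
  forall (I : C) (i1 : hom C I R) (i2 : hom C I S), is_pullback r s i1 i2 ->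
  (* f(R), f(S), f(R /\ S): images under f x f *)
  forall (FR : C) (er : hom C R FR) (mr : hom C FR PY),
    regular_epi er -> mono mr -> mr \o er = ff \o r ->
  forall (FS : C) (es : hom C S FS) (ms : hom C FS PY),
    regular_epi es -> mono ms -> ms \o es = ff \o s ->
  forall (FI : C) (ei : hom C I FI) (mi : hom C FI PY),
    regular_epi ei -> mi \o ei = ff \o (r \o i1) -> mono mi ->
  (* f(R) /\ f(S), as the pullback of mr and ms, represented by mr o j1 *)
  forall (J : C) (j1 : hom C J FR) (j2 : hom C J FS), is_pullback mr ms j1 j2 ->
  same_sub mi (mr \o j1).
Proof.
  intros reg maj X Y f Hf PX pi1 pi2 HPX PY rho1 rho2 HPY ff Hff1 Hff2
    R r Hr [dR [dR1 [dR2 [dr Hdr]]]] S s Hs [dS [dS1 [dS2 [ds Hds]]]]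
    I i1 i2 [EI UI] FR er mr Her Hmr Emr FS es ms Hes Hms Ems
    FI ei mi Hei Emi Hmi J j1 j2 [EJ UJ].
  pose proof reg as reg'.
  destruct reg' as [[_ [PR [_ PB]]] [_ [STAB _]]].
  split.
  -
    destruct (lift ei mr (er \o i1) mi Hei Hmr) as [hR [HR _]].
    { la. rewrite Emr, Emi. la. reflexivity. }
    destruct (lift ei ms (es \o i2) mi Hei Hms) as [hS [HS _]].
    { la. rewrite Ems, Emi. rewrite <- !comp_assoc, EI. reflexivity. }
    destruct (UJ _ hR hS) as [h [Hh1 _]]; [congruence|].
    exists h. rewrite <- comp_assoc, Hh1. exact HR.
  - destruct (PB _ _ _ j1 er) as [P1 [c1 [ro0 [E1 U1]]]].
    pose proof (STAB _ _ _ _ j1 er c1 ro0 Her (conj E1 U1)) as Hc1.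
    destruct (PB _ _ _ (j2 \o c1) es) as [P2 [c2 [sg0 [E2 U2]]]].
    pose proof (STAB _ _ _ _ _ es c2 sg0 Hes (conj E2 U2)) as Hc2.
    assert (KEY : ff \o (r \o (ro0 \o c2)) = ff \o (s \o sg0)).
    { rewrite comp_assoc, <- Emr. nf. rc (eq_sym E1). rc EJ.
      rewrite (comp_assoc _ _ _ _ _ j2 c1 c2), E2. rewrite comp_assoc, Ems. nf. reflexivity. }
    assert (FX1 : forall (M T : C) (m : hom C M PX) (t : hom C T M),
               f \o ((pi1 \o m) \o t) = rho1 \o (ff \o (m \o t))).
    { intros. nf. rewrite comp_assoc, <- Hff1. nf. reflexivity. }
    assert (FX2 : forall (M T : C) (m : hom C M PX) (t : hom C T M),
               f \o ((pi2 \o m) \o t) = rho2 \o (ff \o (m \o t))).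
    { intros. nf. rewrite comp_assoc, <- Hff2. nf. reflexivity. }
    clear U1 U2.
    destruct (PB _ _ _ f f) as [K [k1 [k2 [EK UK]]]].
    destruct (PB _ _ _ (pi2 \o s) k1) as [SK [l1 [l2 [ESK USK]]]].
    assert (rR : forall T (x : hom C T X), exists al, (pi1 \o r) \o al = x /\ (pi2 \o r) \o al = x).
    { intros T x. exists (dr \o x). nf. rc Hdr. split; [rc dR1|rc dR2]; apply comp_id_l. }
    assert (rS : forall T (x : hom C T X), exists al, (pi1 \o s) \o al = x /\ (pi2 \o s) \o al = x).
    { intros T x. exists (ds \o x). nf. rc Hds. split; [rc dS1|rc dS2]; apply comp_id_l. }
    assert (rK : forall T (x : hom C T X), exists al, k1 \o al = x /\ k2 \o al = x).
    { intros T x. destruct (UK _ x x eq_refl) as [u [Hu1 [Hu2 _]]]. eauto. }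
    assert (rSK : forall T (x : hom C T X), exists al, ((pi1 \o s) \o l1) \o al = x /\ (k2 \o l2) \o al = x).
    { intros T x. destruct (rK _ x) as [kx [kx1 kx2]].
      destruct (USK _ (ds \o x) kx) as [u [Hu1 [Hu2 _]]].
      { rewrite kx1. nf. rc Hds. rc dS2. apply comp_id_l. }
      exists u. nf. rc Hu1. rc Hds. rc dS1. rewrite comp_id_l. split; [reflexivity|]. rc Hu2. exact kx2. }
    set (x := (pi1 \o r) \o (ro0 \o c2)).
    set (y := (pi2 \o r) \o (ro0 \o c2)).
    set (x' := (pi1 \o s) \o sg0).
    set (y' := (pi2 \o s) \o sg0).
    assert (Fx : f \o x = f \o x').
    { unfold x, x'. rewrite FX1. rewrite <- (comp_id_r _ _ _ sg0), FX1, comp_id_r, KEY. reflexivity. }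
    assert (Fy : f \o y' = f \o y).
    { unfold y, y'. rewrite FX2. rewrite <- (comp_id_r _ _ _ sg0), FX2, comp_id_r, KEY. reflexivity. }
    destruct (UK _ x x' Fx) as [ka [ka1 [ka2 _]]].
    destruct (UK _ y' y Fy) as [kb [kb1 [kb2 _]]].
    destruct (USK _ sg0 kb) as [ga [ga1 [ga2 _]]].
    { rewrite kb1. reflexivity. }
    assert (G1 : ((pi1 \o s) \o l1) \o ga = x'). { unfold x'. nf. rc ga1. reflexivity. }
    assert (G2 : (k2 \o l2) \o ga = y). { nf. rc ga2. exact kb2. }
    destruct (Lspan reg maj (pi1 \o r) (pi2 \o r) k1 k2 ((pi1 \o s) \o l1) (k2 \o l2) rR rK rSK
       x x' y (ro0 \o c2) ka ga eq_refl eq_refl ka1 ka2 G1 G2) as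
       [T3 [e3 [w [al1 [be1 [al2 [ga3 [He3 [A1 [A2 [B1 [B2 [A3 [A4 [C1 C2]]]]]]]]]]]]]]].
    set (v := (pi2 \o s) \o (l1 \o ga3)).
    assert (H1 : (pi1 \o s) \o (l1 \o ga3) = w). { rewrite comp_assoc. exact C1. }
    assert (H2 : k1 \o (l2 \o ga3) = v). { unfold v. rewrite !comp_assoc, <- ESK. reflexivity. }
    assert (H3 : k2 \o (l2 \o ga3) = y \o e3). { rewrite comp_assoc. exact C2. }
    destruct (Lspan reg maj (pi1 \o r) (pi2 \o r) (pi1 \o s) (pi2 \o s) k1 k2 rR rS rK
       w v (y \o e3) al2 (l1 \o ga3) (l2 \o ga3) A3 A4 H1 eq_refl H2 H3) as
       [T4 [e4 [u [al1' [be1' [al2' [ga4 [He4 [A1' [A2' [B1' [B2' [A3' [A4' [C1' C2']]]]]]]]]]]]]]].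
    assert (RS : r \o al1' = s \o be1').
    { apply (prod_ext pi1 pi2); [exact HPX| |]; rewrite !comp_assoc; congruence. }
    destruct (UI _ al1' be1' RS) as [io [io1 [io2 _]]].
    assert (FIN : mi \o (ei \o io) = mr \o (j1 \o (c1 \o (c2 \o (e3 \o e4))))).
    { rewrite comp_assoc, Emi. nf. rc io1. rc E1. rewrite (comp_assoc _ _ _ _ _ mr er), Emr. nf.
      apply (prod_ext rho1 rho2 _ _ HPY).
      - rewrite <- !FX1. rewrite A1'. transitivity (f \o (x \o (e3 \o e4))).
        + rewrite <- B2. nf. rewrite comp_assoc, <- EK. nf. rc B1. reflexivity.
        + unfold x. nf. reflexivity.
      - rewrite <- !FX2. rewrite A2'. transitivity (f \o (y \o (e3 \o e4))).
        + rewrite <- C1'. rewrite comp_assoc, EK. nf. rc C2'. reflexivity.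
        + unfold y. nf. reflexivity. }
    destruct (lift e4 mi (ei \o io) (mr \o (j1 \o (c1 \o (c2 \o e3)))) He4 Hmi) as [d4 [D4 _]].
    { rewrite FIN. nf. reflexivity. }
    destruct (lift e3 mi d4 (mr \o (j1 \o (c1 \o c2))) He3 Hmi) as [d3 [D3 _]].
    { rewrite D4. nf. reflexivity. }
    destruct (lift c2 mi d3 (mr \o (j1 \o c1)) Hc2 Hmi) as [d2 [D2 _]].
    { rewrite D3. nf. reflexivity. }
    destruct (lift c1 mi d2 (mr \o j1) Hc1 Hmi) as [d1 [D1 _]].
    { rewrite D2. nf. reflexivity. }
    exists d1. exact D1.
Qed.
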